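(* Let $k\geq 2$ and consider the HC model with countable set of spin values $\mathbb Z$ on the Cayley tree $\Gamma^k$, associated with the graph $G$ on $\mathbb Z$ in which every vertex is adjacent to $0$ and no two vertices of $\mathbb Z_0=\mathbb Z\setminus\{0\}$ are adjacent, with activities $\lambda_j>0$. Then: (1) If the series $\sum_{j\in\mathbb Z_0}\lambda_j$ converges, there exists a unique translation-invariant Gibbs measure. (2) If the series $\sum_{j\in\mathbb Z_0}\lambda_j$ diverges, there is no translation-invariant Gibbs measure.
   Context: The Cayley tree $\Gamma^k$ of order $k$ is the infinite tree in which every vertex has exactly $k+1$ neighbours; $V$ is its vertex set. Fix a root $x^0$; for a vertex $x$, $S(x)$ denotes the set of its direct successors (the neighbours of $x$ farther from $x^0$). A configuration is a map $\sigma:V\to\mathbb Z$; it is admissible if $\sigma(x)\sigma(y)=0$ for all nearest neighbours $x,y$ (i.e. $\{\sigma(x),\sigma(y)\}$ is an edge of the graph $G$ above). The HC Hamiltonian is $H(\sigma)=J\sum_{x\in V}\ln\lambda_{\sigma(x)}$ for admissible $\sigma$ and $+\infty$ otherwise, with activities $\lambda_i>0$, $i\in\mathbb Z$. Gibbs measures (tree-indexed Markov chains) of this model are in one-to-one correspondence with normalisable boundary laws; after normalisation at the spin value $0$, boundary laws correspond to families $z_x=(z_{i,x})_{i\in\mathbb Z_0}$ of positive numbers, $x\in V$, satisfying $$z_{i,x}=\lambda_i\prod_{y\in S(x)}\frac{1}{1+\sum_{j\in\mathbb Z_0}z_{j,y}},\qquad i\in\mathbb Z_0 .$$ A translation-invariant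 Gibbs measure is one corresponding to a solution with $z_x=z$ independent of $x$, i.e. to a positive sequence $z=(z_i)_{i\in\mathbb Z_0}$ with $z_i=\lambda_i\bigl(1+\sum_{j\in\mathbb Z_0}z_j\bigr)^{-k}$ for all $i\in\mathbb Z_0$; such a solution is normalisable (hence defines a Gibbs measure) if $\sum_{i}z_i^{(k+1)/k}<\infty$. *)

(* Defs.v *)
From Stdlib Require Import Reals ZArith.
From Coquelicot Require Import Coquelicot.
Open Scope R_scope.

(* Sequences indexed by Z_0 = Z \ {0} are represented as functions Z -> R
   whose value at 0 is ignored. *)

Definition Z0_summable (a : Z -> R) : Prop :=
  ex_series (fun n : nat => a (Z.of_nat (S n))) /\
  ex_series (fun n : nat => a (- Z.of_nat (S n))%Z).

Definition Z0_sum (a : Z -> R) : R :=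
  Series (fun n : nat => a (Z.of_nat (S n))) +
  Series (fun n : nat => a (- Z.of_nat (S n))%Z).

(* Translation-invariant boundary law (normalised at 0): a positive sequence
   z = (z_i)_{i in Z_0} with z_i = lambda_i (1 + sum_{j in Z_0} z_j)^{-k}. *)
Definition TI_boundary_law (k : nat) (lam z : Z -> R) : Prop :=
  (forall i : Z, i <> 0%Z -> 0 < z i) /\
  Z0_summable z /\
  (forall i : Z, i <> 0%Z -> z i = lam i / (1 + Z0_sum z) ^ k).

Definition normalisable (k : nat) (z : Z -> R) : Prop :=
  Z0_summable (fun i => Rpower (z i) ((INR k + 1) / INR k)).

(* Translation-invariant Gibbs measures of the HC model are, via the
   one-to-one correspondence recalled in the context, the normalisable
   translation-invariant boundary laws. *)
Definition TI_Gibbs (k : nat) (lam z : Z -> R) : Prop :=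
  TI_boundary_law k lam z /\ normalisable k z.

(* Main.v *)
Require Import Defs.
From Stdlib Require Import Reals ZArith Lra Lia.
From Coquelicot Require Import Coquelicot.
Open Scope R_scope.

Lemma series_nonneg (a : nat -> R) : (forall n, 0 <= a n) -> ex_series a -> 0 <= Series a.
Proof.
  intros H E.
  assert (Series (fun n => a n * 0) = 0).
  { rewrite Series_scal_r; ring. }
  rewrite <- H0. apply Series_le; auto. intro n; split; [lra|]. specialize (H n). lra.
Qed.

Lemma ex_series_pow (a : nat -> R) (k : nat) : (0 < k)%nat ->
  (forall n, 0 < a n) -> ex_series a ->
  ex_series (fun n => Rpower (a n) ((INR k + 1) / INR k)).
Proof.
  intros Hk Hp E.
  assert (Hkr : 0 < INR k) by (apply lt_0_INR; lia).
  pose proof (ex_series_lim_0 a E) as L.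
  apply is_lim_seq_spec in L.
  destruct (L (mkposreal 1 Rlt_0_1)) as [N HN].
  apply (proj2 (ex_series_incr_n _ N)).
  apply (proj1 (ex_series_incr_n _ N)) in E.
  apply (@ex_series_le R_AbsRing R_CompleteNormedModule _ (fun n => a (N + n)%nat)); auto.
  intro n. change norm with (@abs R_AbsRing). simpl. 
  assert (Hlt : a (N+n)%nat < 1).
  { specialize (HN (N+n)%nat ltac:(lia)). simpl in HN.
    rewrite Rminus_0_r in HN. apply Rabs_def2 in HN. lra. }
  specialize (Hp (N+n)%nat).
  replace ((INR k + 1) / INR k) with (1 + / INR k) by (field; lra).
  rewrite Rpower_plus, Rpower_1 by auto.
  assert (0 < Rpower (a (N+n)%nat) (/ INR k)) by apply exp_pos.
  assert (Rpower (a (N+n)%nat) (/ INR k) <= 1).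
  { unfold Rpower. rewrite <- exp_0. apply Rlt_le, exp_increasing.
    assert (ln (a (N+n)%nat) < 0). { rewrite <- ln_1. apply ln_increasing; lra. }
    assert (0 < / INR k) by (apply Rinv_0_lt_compat; lra). nra. }
  rewrite Rabs_pos_eq by (apply Rmult_le_pos; lra).
  nra.
Qed.

Lemma g_mono (s t : R) (k : nat) : 0 <= s -> s < t -> s * (1+s)^k < t * (1+t)^k.
Proof.
  intros. assert ((1+s)^k <= (1+t)^k) by (apply pow_incr; lra).
  assert (0 < (1+t)^k) by (apply pow_lt; lra). nra.
Qed.

Lemma g_inj (s t : R) (k : nat) : 0 <= s -> 0 <= t -> s * (1+s)^k = t * (1+t)^k -> s = t.
Proof.
  intros. destruct (Rtotal_order s t) as [H2|[H2|H2]]; auto.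
  - apply (g_mono _ _ k) in H2; lra.
  - apply (g_mono _ _ k) in H2; lra.
Qed.

Lemma g_surj (L : R) (k : nat) : 0 < L -> (1 <= k)%nat -> exists s, 0 < s /\ s * (1+s)^k = L.
Proof.
  intros HL Hk.
  assert (C : continuity (fun s => s * (1+s)^k - L)) by reg.
  assert (H1 : 1 < (1+L)^k) by (apply Rlt_pow_R1; lra || lia).
  destruct (IVT _ 0 L C HL) as [s [Hs Hf]].
  - rewrite Rmult_0_l. lra.
  - nra.
  - exists s. destruct (Req_dec s 0) as [->|]; [|split; lra].
    rewrite Rmult_0_l in Hf; lra.
Qed.

Lemma pos_idx (n : nat) : Z.of_nat (S n) <> 0%Z.
Proof. lia. Qed.
Lemma neg_idx (n : nat) : (- Z.of_nat (S n))%Z <> 0%Z.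
Proof. lia. Qed.

Lemma law_props (k : nat) (lam z : Z -> R) : TI_boundary_law k lam z ->
  0 <= Z0_sum z /\ Z0_summable lam /\
  Z0_sum z * (1 + Z0_sum z)^k = Z0_sum lam.
Proof.
  intros [Hp [[E1 E2] Heq]].
  set (Sz := Z0_sum z).
  assert (HS : 0 <= Sz).
  { unfold Sz, Z0_sum. apply Rplus_le_le_0_compat; apply series_nonneg; auto;
    intro n; apply Rlt_le, Hp; [apply pos_idx|apply neg_idx]. }
  assert (Hc : 0 < (1+Sz)^k) by (apply pow_lt; lra).
  assert (Hl : forall i, i <> 0%Z -> lam i = z i * (1+Sz)^k).
  { intros i Hi. rewrite (Heq i Hi). fold Sz. field. lra. }
  split; [exact HS|split].
  - split.
    + apply (ex_series_ext (fun n => z (Z.of_nat (S n)) * (1+Sz)^k)).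
      * intro n. symmetry. apply Hl, pos_idx.
      * apply ex_series_scal_r; auto.
    + apply (ex_series_ext (fun n => z (- Z.of_nat (S n))%Z * (1+Sz)^k)).
      * intro n. symmetry. apply Hl, neg_idx.
      * apply ex_series_scal_r; auto.
  - unfold Z0_sum at 1.
    rewrite (Series_ext _ (fun n => z (Z.of_nat (S n)) * (1+Sz)^k))
      by (intro n; apply Hl, pos_idx).
    rewrite (Series_ext (fun n => lam (- Z.of_nat (S n))%Z) (fun n => z (- Z.of_nat (S n))%Z * (1+Sz)^k))
      by (intro n; apply Hl, neg_idx).
    rewrite !Series_scal_r. unfold Sz, Z0_sum. ring.
Qed.

Lemma g_surj' (L : R) (k : nat) : 0 <= L -> (1 <= k)%nat -> exists s, 0 <= s /\ s * (1+s)^k = L.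
Proof.
  intros HL Hk. destruct (Req_dec L 0) as [->|].
  - exists 0. split; [lra|ring].
  - destruct (g_surj L k ltac:(lra) Hk) as [s [? ?]]. exists s; split; lra.
Qed.

Theorem mainTheorem1 :
  forall (k : nat), (2 <= k)%nat ->
  forall (lam : Z -> R), (forall j : Z, 0 < lam j) ->
    (Z0_summable lam ->
       exists z : Z -> R, TI_Gibbs k lam z /\
         forall z' : Z -> R, TI_Gibbs k lam z' ->
           forall i : Z, i <> 0%Z -> z' i = z i) /\
    (~ Z0_summable lam -> ~ (exists z : Z -> R, TI_Gibbs k lam z)).
Proof.
  intros k Hk lam Hlam. split.
  - intros [E1 E2].
    assert (HL : 0 <= Z0_sum lam).
    { unfold Z0_sum. apply Rplus_le_le_0_compat; apply series_nonneg; auto;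
      intro n; apply Rlt_le, Hlam. }
    destruct (g_surj' _ k HL ltac:(lia)) as [s [Hs Hg]].
    assert (Hc : 0 < (1+s)^k) by (apply pow_lt; lra).
    set (z := fun i => lam i * / (1+s)^k).
    assert (Hzp : forall i, 0 < z i).
    { intro i. unfold z. apply Rmult_lt_0_compat; auto. apply Rinv_0_lt_compat; lra. }
    assert (Ez1 : ex_series (fun n => z (Z.of_nat (S n)))) by (apply ex_series_scal_r; auto).
    assert (Ez2 : ex_series (fun n => z (- Z.of_nat (S n))%Z)) by (apply ex_series_scal_r; auto).
    assert (Hsum : Z0_sum z = s).
    { unfold Z0_sum, z. rewrite !Series_scal_r.
      replace (Series (fun n => lam (Z.of_nat (S n))) * / (1 + s) ^ k +
               Series (fun n => lam (- Z.of_nat (S n))%Z) * / (1 + s) ^ k)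
        with (Z0_sum lam / (1+s)^k) by (unfold Z0_sum, Rdiv; ring).
      rewrite <- Hg. field. lra. }
    exists z. split.
    + split.
      * split; [intros; apply Hzp|split; [split; auto|]].
        intros i Hi. rewrite Hsum. reflexivity.
      * split; apply ex_series_pow; auto; lia.
    + intros z' [Hz' _] i Hi.
      destruct (law_props _ _ _ Hz') as [HS' [_ Hg']].
      assert (Z0_sum z' = s).
      { apply (g_inj _ _ k); auto. rewrite Hg', Hg. reflexivity. }
      destruct Hz' as [_ [_ Heq]]. rewrite (Heq i Hi), H. reflexivity.
  - intros Hn [z [Hz _]]. apply Hn. apply (law_props _ _ _ Hz).
Qed.
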